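(* Let $m\ge 1$, let $\lambda_2\ge 0$, and let $f_1\ge f_2\ge\cdots\ge f_m$ be real numbers. Then there exist real numbers $\tau_{ij}\in[-\lambda_2,\lambda_2]$ for $i\ne j\in\{1,\dots,m\}$, satisfying $\tau_{ij}=-\tau_{ji}$ for all $i\neq j$, such that $$f_i+\sum_{j\in\{1,\dots,m\}\setminus\{i\}}\tau_{ij}=0,\qquad i=1,\dots,m,$$ if and only if $$\sum_{j=1}^{k}f_j\le\lambda_2 k(m-k)\quad\text{for }k=1,\dots,m-1,$$ and $\sum_{j=1}^{m}f_j=0$. *)

(* Defs.v *)
From mathcomp Require Import all_boot all_order all_algebra.
From mathcomp Require Import reals.

(* Main.v *)
Require Import Defs.
From mathcomp Require Import all_boot all_order all_algebra.
From mathcomp Require Import reals.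
From mathcomp Require Import all_classical all_analysis.
From mathcomp Require Import lra ring zify.
Import Order.TTheory GRing.Theory Num.Theory.
Import numFieldNormedType.Exports.
Local Open Scope ring_scope.

Section W.
Context {R : realType}.
Variable lam : R.

Definition cl (x : R) : R := Order.min lam (Order.max 0 x).

Lemma clE (lam0 : 0 <= lam) x : cl x = if x <= 0 then 0 else if x <= lam then x else lam.
Proof.
rewrite /cl maxEle; case: (leP 0 x) => h1; rewrite minEle;
  case: (leP lam x) => h2; case: (leP x 0) => h3; case: (leP x lam) => h4;
  case: (leP lam 0) => h5;
  rewrite /=; lra.
Qed.

Ltac c1 x := rewrite ?clE //; case: (leP x 0) => ?; case: (leP x lam) => ?.

Lemma cl_ge0 (lam0 : 0 <= lam) x : 0 <= cl x.
Proof. c1 x; lra. Qed.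
Lemma cl_le (lam0 : 0 <= lam) x : cl x <= lam.
Proof. c1 x; lra. Qed.
Lemma cl_mono (lam0 : 0 <= lam) x y : x <= y -> cl x <= cl y.
Proof. move=> ?; c1 x; c1 y; lra. Qed.
Lemma cl_lip (lam0 : 0 <= lam) x y : x <= y -> cl y - cl x <= y - x.
Proof. move=> ?; c1 x; c1 y; lra. Qed.
Lemma cl_pos (lam0 : 0 <= lam) x : 0 < cl x -> 0 < x.
Proof. c1 x; lra. Qed.
Lemma cl_ltlam (lam0 : 0 <= lam) x : cl x < lam -> x < lam.
Proof. c1 x; lra. Qed.
Lemma cl_id (lam0 : 0 <= lam) x : 0 <= x <= lam -> cl x = x.
Proof. move=> /andP[? ?]; c1 x; lra. Qed.
Lemma cl_big (lam0 : 0 <= lam) x : lam <= x -> cl x = lam.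
Proof. move=> ?; c1 x; lra. Qed.
Lemma cl_small (lam0 : 0 <= lam) x : x <= 0 -> cl x = 0.
Proof. move=> ?; c1 x; lra. Qed.
End W.
Lemma cont {R : realType} (lam : R) (h : nat -> R) n :
  continuous (fun c : R => \sum_(0 <= j < n) Order.min lam (Order.max 0 (h j - c))).
Proof.
elim: n => [|n IH] x.
  under eq_fun do rewrite big_geq //.
  exact: cvg_cst.
under eq_fun do rewrite big_nat_recr //=.
apply: (continuousD (IH x)).
apply: continuous_min; first exact: cvg_cst.
apply: continuous_max; first exact: cvg_cst.
apply: continuousB; first exact: cvg_cst.
exact: cvg_id.
Qed.

Lemma bndM {R : realType} (h : nat -> R) n : exists M, 0 <= M /\ forall j, (j < n)%N -> `|h j| <= M.
Proof.
elim: n => [|n [M [M0 HM]]]; first by exists 0.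
exists (Order.max M `|h n|); split; first by rewrite le_max M0.
move=> j; rewrite ltnS leq_eqVlt => /orP[/eqP->|/HM hj]; rewrite le_max ?lexx ?orbT //.
by rewrite hj.
Qed.

Lemma water {R : realType} (lam : R) (lam0 : 0 <= lam) (h : nat -> R) n r :
  0 <= r <= n%:R * lam ->
  exists c, \sum_(0 <= j < n) Order.min lam (Order.max 0 (h j - c)) = r.
Proof.
move=> /andP[r0 rn].
have [M [M0 HM]] := bndM h n.
set F := fun c : R => \sum_(0 <= j < n) Order.min lam (Order.max 0 (h j - c)).
have Fa : F (- M - lam) = n%:R * lam.
  rewrite /F (eq_big_nat _ _ (F2 := fun _ => lam)); first by rewrite sumr_const_nat subn0 mulr_natl.
  move=> j /andP[_ hj]; have := HM j hj; rewrite ler_norml => /andP[h1 h2].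
  rewrite (@max_r _ _ 0); last lra.
  by rewrite min_l //; lra.
have Fb : F M = 0.
  rewrite /F big1_seq // => j; rewrite mem_index_iota => /andP[_ hj].
  have := HM j hj; rewrite ler_norml => /andP[h1 h2].
  rewrite (@max_l _ _ 0); last lra.
  by rewrite min_r.
have leab : - M - lam <= M by lra.
have [||c _ Fc] := IVT (f := F) (v := r) leab.
- by apply: continuous_subspaceT; exact: cont.
- rewrite Fa Fb.
  have hn : 0 <= n%:R * lam by rewrite mulr_ge0.
  by rewrite (min_r hn) (max_l hn) r0 rn.
- by exists c.
Qed.
Lemma antisym0 {R : realType} (tau : nat -> nat -> R) k :
  (forall i j, (i < k)%N -> (j < k)%N -> i != j -> tau i j = - tau j i) ->
  \sum_(0 <= i < k) \sum_(0 <= j < k | j != i) tau i j = 0.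
Proof.
move=> ha.
set Y := \sum_(0 <= i < k) _.
have : Y = - Y.
  rewrite {1}/Y.
  under eq_bigr do rewrite big_mkcond.
  rewrite exchange_big /= /Y -sumrN.
  apply: eq_big_nat => i /andP[_ hi].
  rewrite -sumrN [RHS]big_mkcond /=; apply: eq_big_nat => j /andP[_ hj] /=.
  case: (eqVneq i j) => [->|hne] /=; first by [].
  by apply: ha => //; rewrite eq_sym.
move=> e; lra.
Qed.

Lemma fwd_key {R : realType} {m : nat} {g : nat -> R} {tau : nat -> nat -> R} :
  (forall i j, (i < m)%N -> (j < m)%N -> i != j -> tau i j = - tau j i) ->
  (forall i, (i < m)%N -> g i + \sum_(0 <= j < m | j != i) tau i j = 0) ->
  forall k, (k <= m)%N ->
  \sum_(0 <= i < k) g i = - \sum_(0 <= i < k) \sum_(k <= j < m) tau i j.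
Proof.
move=> ha he k hk.
have -> : \sum_(0 <= i < k) g i = - \sum_(0 <= i < k) \sum_(0 <= j < m | j != i) tau i j.
  rewrite -sumrN; apply: eq_big_nat => i /andP[_ hi].
  have := he i (leq_trans hi hk) => e; lra.
congr (- _).
rewrite (eq_big_nat _ _ (F2 := fun i => \sum_(0 <= j < k | j != i) tau i j + \sum_(k <= j < m) tau i j)).
  rewrite big_split /= antisym0 ?add0r // => i j hi hj.
  by apply: ha; apply: leq_trans hk.
move=> i /andP[_ hi]; rewrite (big_cat_nat (leq0n k) hk) /=; congr (_ + _).
rewrite big_nat_cond [RHS]big_nat_cond; apply: eq_bigl => j /=.
case: (boolP (k <= j < m)%N) => //= /andP[hj _]; 
by apply/eqP => ji; move: hi; rewrite -ji ltnNge hj.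
Qed.

Lemma fwd {R : realType} (lam : R) m (g : nat -> R) (tau : nat -> nat -> R) :
  (forall i j, (i < m)%N -> (j < m)%N -> i != j -> - lam <= tau i j <= lam) ->
  (forall i j, (i < m)%N -> (j < m)%N -> i != j -> tau i j = - tau j i) ->
  (forall i, (i < m)%N -> g i + \sum_(0 <= j < m | j != i) tau i j = 0) ->
  (forall k, (k <= m)%N -> \sum_(0 <= i < k) g i <= lam * k%:R * (m - k)%:R) /\
  \sum_(0 <= i < m) g i = 0.
Proof.
move=> hb ha he; split.
  move=> k hk; rewrite (fwd_key ha he k hk) -sumrN.
  apply: le_trans (_ : _ <= \sum_(0 <= i < k) ((m - k)%:R * lam)) _.
    apply: ler_sum_nat => i /andP[_ hi]; rewrite -sumrN.
    apply: le_trans (_ : _ <= \sum_(k <= j < m) lam) _.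
      apply: ler_sum_nat => j /andP[hj1 hj2].
      have hij : i != j by apply/eqP => ij; move: hi; rewrite ij ltnNge hj1.
      have := hb i j (leq_trans hi hk) hj2 hij => /andP[h1 h2]; lra.
    by rewrite sumr_const_nat mulr_natl.
  rewrite sumr_const_nat subn0.
  have -> : ((m - k)%:R * lam) *+ k = lam * k%:R * (m - k)%:R by rewrite -mulr_natl; ring.
  exact: lexx.
rewrite (fwd_key ha he m (leqnn m)) big1 ?oppr0 // => i _.
by rewrite big_geq.
Qed.
Lemma argmin {R : realType} (D : nat -> R) n :
  exists k, (k <= n)%N /\ forall j, (j <= n)%N -> D k <= D j.
Proof.
elim: n => [|n [k [hk Hk]]].
  by exists 0%N; split => // j; rewrite leqn0 => /eqP ->.
case: (leP (D k) (D n.+1)) => h.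
  exists k; split; first exact: leqW.
  move=> j; rewrite leq_eqVlt ltnS => /orP[/eqP->|]; [exact: h|exact: Hk].
exists n.+1; split => // j; rewrite leq_eqVlt ltnS => /orP[/eqP->|/Hk hj]; first exact: lexx.
exact: le_trans (ltW h) hj.
Qed.

Lemma bwd {R : realType} (lam : R) (lam0 : 0 <= lam) n : forall f : nat -> R,
  (forall i j, (i <= j < n)%N -> f j <= f i) ->
  (forall k, (k <= n)%N -> \sum_(0 <= j < k) f j <= lam * k%:R * (n - k)%:R) ->
  \sum_(0 <= j < n) f j = 0 ->
  exists tau : nat -> nat -> R, (forall i j, - lam <= tau i j <= lam) /\
    (forall i j, tau i j = - tau j i) /\
    (forall i, (i < n)%N -> f i + \sum_(0 <= j < n | j != i) tau i j = 0).
Proof.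
elim: n => [|n IH] f hs hp h0.
  exists (fun _ _ => 0); split; first by move=> *; apply/andP; split; lra.
  by split => //; move=> *; rewrite oppr0.
set r := - f n.
have Sn : \sum_(0 <= j < n.+1) f j = \sum_(0 <= j < n) f j + f n by rewrite big_nat_recr.
have r0 : 0 <= r.
  have : \sum_(0 <= j < n.+1) f n <= \sum_(0 <= j < n.+1) f j.
    apply: ler_sum_nat => j /andP[_ hj]; apply: hs; apply/andP; split; [by rewrite -ltnS | exact: ltnSn].
  rewrite sumr_const_nat h0 subn0 -mulr_natr => h.
  have := ltr0Sn R n => h'; rewrite /r; nra.
have rn : r <= n%:R * lam.
  have := hp n (leqnSn n); rewrite subSnn mulr1 => h.
  rewrite /r; lra.
have hr : 0 <= r <= n%:R * lam by rewrite r0 rn.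
have [c hc] := water lam lam0 f n r hr.
set t := fun j => cl lam (f j - c).
have sumt : \sum_(0 <= j < n) t j = r by [].
have t0 : forall j, 0 <= t j by move=> j; exact: cl_ge0.
have tl : forall j, t j <= lam by move=> j; exact: cl_le.
have tmono : forall i j, (i <= j < n.+1)%N -> t j <= t i.
  move=> i j hij; apply: cl_mono => //; have := hs i j hij; lra.
set f' := fun j => f j - t j.
have f'mono : forall i j, (i <= j < n)%N -> f' j <= f' i.
  move=> i j /andP[hij hjn]; have hh : (i <= j < n.+1)%N by rewrite hij ltnS ltnW.
  have := hs i j hh => h1.
  have := @cl_lip R lam lam0 (f j - c) (f i - c) ltac:(lra).
  rewrite /f' /t; lra.
have S'E : forall k, \sum_(0 <= j < k) f' j = \sum_(0 <= j < k) f j - \sum_(0 <= j < k) t j.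
  by move=> k; rewrite /f' sumrB.
have h0' : \sum_(0 <= j < n) f' j = 0.
  rewrite S'E sumt /r; lra.
have claimA : forall k, (k <= n)%N -> (forall j, (j < k)%N -> t j = lam) ->
    \sum_(0 <= j < k) f' j <= lam * k%:R * (n - k)%:R.
  move=> k hk ht; rewrite S'E.
  have -> : \sum_(0 <= j < k) t j = k%:R * lam.
    rewrite (eq_big_nat _ _ (F2 := fun _ => lam)); last by move=> j /andP[_ hj]; exact: ht.
    by rewrite sumr_const_nat subn0 mulr_natl.
  have := hp k (leqW hk); rewrite subSn // -natr1 natrB //; lra.
have claimB : forall k, (k <= n)%N -> (forall j, (k <= j < n)%N -> t j = 0) ->
    \sum_(0 <= j < k) f' j <= lam * k%:R * (n - k)%:R.
  move=> k hk ht; rewrite S'E.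
  have U0 : \sum_(k <= j < n) t j = 0.
    by rewrite big_nat_cond big1 // => j /andP[hj _]; exact: ht.
  have Tk : \sum_(0 <= j < k) t j = r.
    by rewrite -sumt (big_cat_nat (leq0n k) hk) /= U0 addr0.
  have Tkle : \sum_(0 <= j < k) t j <= k%:R * lam.
    apply: le_trans (_ : _ <= \sum_(0 <= j < k) lam) _.
      by apply: ler_sum_nat => j _; exact: tl.
    by rewrite sumr_const_nat subn0 mulr_natl.
  have tailf : (n - k)%:R * f n <= \sum_(k <= j < n) f j.
    apply: le_trans (_ : _ <= \sum_(k <= j < n) f n) _.
      by rewrite sumr_const_nat mulr_natl.
    apply: ler_sum_nat => j /andP[_ hj]; apply: hs; apply/andP; split; [exact: ltnW | exact: ltnSn].
  have split0 : \sum_(0 <= j < n) f j = \sum_(0 <= j < k) f j + \sum_(k <= j < n) f j.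
    by rewrite (big_cat_nat (leq0n k) hk).
  have Q0 : 0 <= (n - k)%:R :> R by rewrite ler0n.
  have hQ : (n - k)%:R * r <= (n - k)%:R * (k%:R * lam) by apply: ler_wpM2l => //; rewrite -Tk.
  rewrite Tk; move: hQ tailf split0; rewrite /r; move: h0; rewrite Sn; lra.
have hp' : forall k, (k <= n)%N -> \sum_(0 <= j < k) f' j <= lam * k%:R * (n - k)%:R.
  pose D := fun k : nat => lam * k%:R * (n - k)%:R - \sum_(0 <= j < k) f' j.
  have [k0 [hk0 Hk0]] := argmin D n.
  suff Dk0 : 0 <= D k0 by move=> k hk; have := Hk0 k hk; move: Dk0; rewrite /D; lra.
  case: k0 hk0 Hk0 => [|k] hk0 Hk0.
    have := claimA 0%N (leq0n n) (fun j hj => False_ind _ (notF hj)); rewrite /D; lra.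
  case: (ltnP k.+1 n) => hkn; last first.
    have e : k.+1 = n by apply/eqP; rewrite eqn_leq hk0 hkn.
    rewrite e /D subr_ge0; apply: claimB (leqnn n) _.
    by move=> j /andP[h1 h2]; move: (leq_ltn_trans h1 h2); rewrite ltnn.
  have [htk|htk] := eqVneq (t k) lam.
    rewrite /D subr_ge0; apply: claimA (ltnW hkn) _.
    move=> j hj; apply/eqP; rewrite eq_le tl /= -htk; apply: tmono.
    by rewrite -ltnS hj /= ltnS ltnW.
  have [htk1|htk1] := eqVneq (t k.+1) 0.
    rewrite /D subr_ge0; apply: claimB (ltnW hkn) _.
    move=> j /andP[hj1 hj2]; apply/eqP; rewrite eq_le t0 andbT -htk1; apply: tmono.
    by rewrite hj1 ltnS ltnW.
  exfalso.
  have tk_lt : t k < lam by rewrite lt_neqAle htk tl.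
  have tk1_pos : 0 < t k.+1 by rewrite lt_neqAle eq_sym htk1 t0.
  have x_lt := cl_ltlam lam lam0 _ tk_lt.
  have y_pos := cl_pos lam lam0 _ tk1_pos.
  have fkk : f k.+1 <= f k by apply: hs; rewrite leqnSn /= ltnS ltnW.
  have f'k : f' k = c.
    rewrite /f' /t cl_id //; first lra; apply/andP; split; lra.
  have f'k1 : f' k.+1 = c.
    rewrite /f' /t cl_id //; first lra; apply/andP; split; lra.
  have lampos : 0 < lam by have := tl k.+1; lra.
  have e1 : \sum_(0 <= j < k.+2) f' j = \sum_(0 <= j < k.+1) f' j + f' k.+1 by rewrite big_nat_recr.
  have e2 : \sum_(0 <= j < k.+1) f' j = \sum_(0 <= j < k) f' j + f' k by rewrite big_nat_recr.
  have hk1 : (k <= n)%N by apply: ltnW.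
  have hk2 : (k.+1 <= n)%N by apply: ltnW.
  have h1 := Hk0 k (ltnW hk0).
  have h2 := Hk0 k.+2 hkn.
  move: h1 h2; rewrite /D !natrB // -!natr1; lra.
have [tau' [tb [ta te]]] := IH f' f'mono hp' h0'.
pose tau := fun i j : nat => if i == n then (if (j < n)%N then t j else 0)
  else if j == n then (if (i < n)%N then - t i else 0) else tau' i j.
exists tau; split; [|split].
- move=> i j; rewrite /tau.
  have hh : forall x, 0 <= x <= lam -> - lam <= x <= lam.
    by move=> x /andP[h1 h2]; apply/andP; split; lra.
  have hh' : forall x, 0 <= x <= lam -> - lam <= - x <= lam.
    by move=> x /andP[h1 h2]; apply/andP; split; lra.
  have z : (0:R) <= 0 <= lam by apply/andP; split; lra.
  case: ifP => _; first by case: ifP => _; apply: hh; rewrite ?z ?t0 ?tl.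
  case: ifP => _; first by case: ifP => _; [apply: hh'; rewrite t0 tl | apply: hh].
  exact: tb.
- move=> i j; rewrite /tau.
  case: (eqVneq i n) => hin; case: (eqVneq j n) => hjn; subst => /=;
  rewrite ?eqxx ?ltnn /=; try by rewrite oppr0.
  + by case: ifP; rewrite ?opprK ?oppr0.
  + by case: ifP; rewrite ?opprK ?oppr0.
  + exact: ta.
- move=> i; rewrite ltnS leq_eqVlt => /orP[/eqP ->|hi].
  + rewrite big_mkcond big_nat_recr //= eqxx /= addr0.
    rewrite (eq_big_nat _ _ (F2 := t)); first by rewrite sumt /r; lra.
    move=> j /andP[_ hj]; rewrite /tau eqxx hj.
    by rewrite (ltn_eqF hj).
  + have hin : (n == i) = false by rewrite eq_sym (ltn_eqF hi).
    have key : \sum_(0 <= j < n.+1 | j != i) tau i j = \sum_(0 <= j < n | j != i) tau' i j - t i.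
      rewrite big_mkcond big_nat_recr //= hin /= /tau (ltn_eqF hi) eqxx hi.
      rewrite [in RHS]big_mkcond; congr (_ + _).
      apply: eq_big_nat => j /andP[_ hj].
      by rewrite (ltn_eqF hj).
    rewrite key; have := te i hi; rewrite /f'; lra.
Qed.
Theorem corollary1 (R : realType) (m : nat) (lambda2 : R) (f : 'I_m -> R) :
  (1 <= m)%N ->
  0 <= lambda2 ->
  (forall i j : 'I_m, (i <= j)%N -> f j <= f i) ->
  ((exists tau : 'I_m -> 'I_m -> R,
       (forall i j : 'I_m, i != j -> - lambda2 <= tau i j <= lambda2) /\
       (forall i j : 'I_m, i != j -> tau i j = - tau j i) /\
       (forall i : 'I_m, f i + \sum_(j : 'I_m | j != i) tau i j = 0))
   <->
   ((forall k : nat, (1 <= k <= m.-1)%N ->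
       \sum_(j : 'I_m | (j < k)%N) f j <= lambda2 * k%:R * (m - k)%:R) /\
    \sum_(j : 'I_m) f j = 0)).
Proof.
move=> hm lam0 hs.
pose i0 : 'I_m := Ordinal hm.
pose g : nat -> R := fun j => f (insubd i0 j).
have gE : forall i : 'I_m, g i = f i by move=> i; rewrite /g valKd.
have insE : forall a, (a < m)%N -> val (insubd i0 a) = a.
  by move=> a ha; rewrite val_insubd ha.
have prefE : forall k, (k <= m)%N ->
    \sum_(j : 'I_m | (j < k)%N) f j = \sum_(0 <= j < k) g j.
  move=> k hk; under eq_bigr do rewrite -gE.
  rewrite -(big_mkord (fun j => (j < k)%N) g) (big_nat_widen 0 k m _ _ hk).
  by apply: eq_bigl => j.
have totE : \sum_(j : 'I_m) f j = \sum_(0 <= j < m) g j.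
  under eq_bigr do rewrite -gE.
  by rewrite -(big_mkord xpredT g).
split.
- case=> tau [hb [ha he]].
  pose taun := fun a b : nat => tau (insubd i0 a) (insubd i0 b).
  have neqE : forall a b, (a < m)%N -> (b < m)%N -> a != b -> insubd i0 a != insubd i0 b.
    move=> a b ham hbm hab; apply/eqP => /(congr1 val); rewrite !insE //.
    by move/eqP; rewrite (negbTE hab).
  have he' : forall i, (i < m)%N -> g i + \sum_(0 <= j < m | j != i) taun i j = 0.
    move=> i hi; have := he (insubd i0 i); rewrite /g.
    rewrite (big_mkord (fun j => j != i) (taun i)).
    congr (_ + _ = _).
    apply: eq_big => j; first by rewrite -(inj_eq val_inj) insE.
    by move=> _; rewrite /taun valKd.
  have [hpre htot] := fwd lambda2 m g taun
    (fun i j hi hj hij => hb _ _ (neqE i j hi hj hij))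
    (fun i j hi hj hij => ha _ _ (neqE i j hi hj hij)) he'.
  split; last by rewrite totE.
  move=> k /andP[h1 h2]; rewrite prefE; last by lia.
  apply: hpre; lia.
- case=> hpre htot.
  have H1 : forall i j, (i <= j < m)%N -> g j <= g i.
    move=> i j /andP[hij hjm]; rewrite /g; apply: hs.
    rewrite !insE //; lia.
  have H2 : forall k, (k <= m)%N -> \sum_(0 <= j < k) g j <= lambda2 * k%:R * (m - k)%:R.
    move=> k hk.
    have [->|kpos] := posnP k; first by rewrite big_geq // mulr0 mul0r.
    case: (eqVneq k m) => [->|km].
      by rewrite subnn mulr0 -totE htot.
    rewrite -prefE //; apply: hpre; lia.
  have H3 : \sum_(0 <= j < m) g j = 0 by rewrite -totE.
  have [tau [tb [ta te]]] := bwd lambda2 lam0 m g H1 H2 H3.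
  exists (fun i j : 'I_m => tau i j); split; [|split].
  + by move=> i j _; exact: tb.
  + by move=> i j _; exact: ta.
  + move=> i.
    have e : \sum_(j : 'I_m | j != i) tau i j = \sum_(0 <= j < m | j != val i) tau (val i) j.
      by rewrite (big_mkord (fun j => j != val i) (tau i)).
    by rewrite -gE e; exact: te.
Qed.
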